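(* Let $(X,d)$ be a complete metric space and $\mathcal S$ a semigroup such that the action $(\mathcal S,X)$ is strong-orbit $k$-Lipschitzian with $k<\kappa(X)$. Then either all the orbits are unbounded or there exists $x\in X$ such that $sx=x$ for all $s\in\mathcal S$.
   Context: A semigroup action is a map $\mathcal S\times X\to X$, $(s,x)\mapsto sx$, with $(st)x=s(tx)$. The orbit of $x$ is $o(x)=\{x\}\cup\{sx:s\in\mathcal S\}$; for nonempty $C\subseteq X$, $D(x,C)=\sup\{d(x,y):y\in C\}$. The action is strong-orbit $k$-Lipschitzian ($k>0$) if $D(sx,o(sy))\le k\,D(x,o(y))$ for all $s\in\mathcal S$, $x,y\in X$. $B(x,r)$ denotes the closed ball. For $c\ge1$, balls in $X$ are $c$-regular if for every $k'<c$ there are $\mu,\alpha\in(0,1)$ such that for all $x,y\in X$ and $r>0$ with $d(x,y)\ge(1-\mu)r$ there exists $z\in X$ with $B(x,(1+\mu)r)\cap B(y,k'(1+\mu)r)\subseteq B(z,\alpha r)$. The Lifschitz characteristic is $\kappa(X)=\sup\{c\ge1:\text{balls in }X\text{ are }c\text{-regular}\}$. *)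

(* Defs.v *)
From Stdlib Require Import Reals.
From Coquelicot Require Import Coquelicot.
Open Scope R_scope.

Definition is_metric {X : Type} (d : X -> X -> R) : Prop :=
  (forall x y, 0 <= d x y) /\
  (forall x y, d x y = 0 <-> x = y) /\
  (forall x y, d x y = d y x) /\
  (forall x y z, d x z <= d x y + d y z).

Definition metric_complete {X : Type} (d : X -> X -> R) : Prop :=
  forall u : nat -> X,
    (forall eps, 0 < eps -> exists N, forall m n, (N <= m)%nat -> (N <= n)%nat ->
        d (u m) (u n) < eps) ->
    exists l, forall eps, 0 < eps -> exists N, forall n, (N <= n)%nat -> d (u n) l < eps.

Definition is_action {S X : Type} (mul : S -> S -> S) (act : S -> X -> X) : Prop :=
  forall s t x, act (mul s t) x = act s (act t x).

Definition orbit {S X : Type} (act : S -> X -> X) (x : X) : X -> Prop :=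
  fun y => y = x \/ exists s, y = act s x.

Definition Dsup {X : Type} (d : X -> X -> R) (x : X) (C : X -> Prop) : Rbar :=
  Lub_Rbar (fun r => exists y, C y /\ r = d x y).

Definition strong_orbit_lipschitz {S X : Type} (d : X -> X -> R)
    (act : S -> X -> X) (k : R) : Prop :=
  forall s x y,
    Rbar_le (Dsup d (act s x) (orbit act (act s y)))
            (Rbar_mult k (Dsup d x (orbit act y))).

Definition bounded_set {X : Type} (d : X -> X -> R) (C : X -> Prop) : Prop :=
  exists x0 M, forall y, C y -> d x0 y <= M.

Definition balls_regular {X : Type} (d : X -> X -> R) (c : R) : Prop :=
  forall k', k' < c ->
    exists mu alpha, 0 < mu < 1 /\ 0 < alpha < 1 /\
      forall x y r, 0 < r -> d x y >= (1 - mu) * r ->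
        exists z, forall w, d x w <= (1 + mu) * r -> d y w <= k' * ((1 + mu) * r) ->
          d z w <= alpha * r.

Definition lifschitz_char {X : Type} (d : X -> X -> R) : Rbar :=
  Lub_Rbar (fun c => 1 <= c /\ balls_regular d c).

(* Main.v *)
Require Import Defs.
From Stdlib Require Import Reals.
From Coquelicot Require Import Coquelicot.
From Stdlib Require Import Lra Lia IndefiniteDescription Classical.
Open Scope R_scope.

Lemma Dsup_le {X : Type} (d : X -> X -> R) x (C : X -> Prop) r :
  (forall w, C w -> d x w <= r) -> Rbar_le (Dsup d x C) (Finite r).
Proof.
  intros H. unfold Dsup. destruct (Lub_Rbar_correct (fun r0 => exists y, C y /\ r0 = d x y)) as [_ Hl].
  apply Hl. intros a [y [Hy ->]]. simpl. auto.
Qed.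

Lemma Dsup_ge {X : Type} (d : X -> X -> R) x (C : X -> Prop) w :
  C w -> Rbar_le (Finite (d x w)) (Dsup d x C).
Proof.
  intros H. unfold Dsup. destruct (Lub_Rbar_correct (fun r0 => exists y, C y /\ r0 = d x y)) as [Hu _].
  apply Hu. eauto.
Qed.

Definition PP {S X : Type} (d : X -> X -> R) (act : S -> X -> X) z y r :=
  forall w, orbit act y w -> d z w <= r.

Lemma lipP {S X : Type} (d : X -> X -> R) (act : S -> X -> X) k (Hk : 0 < k)
  (Hlip : strong_orbit_lipschitz d act k) z y r :
  PP d act z y r -> forall s, PP d act (act s z) (act s y) (k * r).
Proof.
  intros H s w Hw.
  pose proof (Hlip s z y) as H1.
  pose proof (Dsup_le d z (orbit act y) r H) as Hle.
  pose proof (Dsup_ge d z (orbit act y) y (or_introl eq_refl)) as Hge.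
  pose proof (Dsup_ge d (act s z) (orbit act (act s y)) w Hw) as Hw'.
  destruct (Dsup d z (orbit act y)) as [a| |]; simpl in Hle, Hge, H1; try contradiction.
  pose proof (Rbar_le_trans _ _ _ Hw' H1) as H2. simpl in H2.
  apply Rle_trans with (k * a); auto. apply Rmult_le_compat_l; lra.
Qed.

Lemma PP_sub {S X : Type} (d : X -> X -> R) (mul : S -> S -> S) (act : S -> X -> X)
  (Hact : is_action mul act) z y r s : PP d act z y r -> PP d act z (act s y) r.
Proof.
  intros H w [-> | [t ->]]; apply H; right.
  - exists s; auto.
  - exists (mul t s). rewrite Hact; auto.
Qed.

Lemma PP_mono {S X : Type} (d : X -> X -> R) (act : S -> X -> X) z y r r' :
  r <= r' -> PP d act z y r -> PP d act z y r'.
Proof. intros Hr H w Hw. specialize (H w Hw). lra. Qed.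

Theorem corollary4p2 (X : Type) (d : X -> X -> R)
  (Hmetric : is_metric d) (Hcomplete : metric_complete d)
  (S : Type) (mul : S -> S -> S)
  (Hassoc : forall s t u, mul s (mul t u) = mul (mul s t) u)
  (act : S -> X -> X) (Hact : is_action mul act)
  (k : R) (Hk : 0 < k)
  (Hlip : strong_orbit_lipschitz d act k)
  (Hkappa : Rbar_lt (Finite k) (lifschitz_char d)) :
  (forall x, ~ bounded_set d (orbit act x)) \/
  (exists x, forall s, act s x = x).
Proof.
  destruct Hmetric as [Hpos [Hzero [Hsym Htri]]].
  destruct (classic (exists x, bounded_set d (orbit act x))) as [[x0 [p [M HM]]] | Hn];
    [right | left; intros x Hx; apply Hn; eauto].
  assert (Hc : exists c, (1 <= c /\ balls_regular d c) /\ k < c).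
  { apply NNPP; intros Hno.
    unfold lifschitz_char in Hkappa.
    destruct (Lub_Rbar_correct (fun c => 1 <= c /\ balls_regular d c)) as [_ Hl].
    apply (Rbar_lt_not_le _ _ Hkappa). apply Hl.
    intros c Hc. simpl. apply Rnot_lt_le. intros Hlt. apply Hno; eauto. }
  destruct Hc as [c [[_ Hreg] Hkc]].
  destruct (Hreg k Hkc) as [mu [alpha [Hmu [Hal Hball]]]].
  set (beta := Rmax alpha (1 - mu)).
  assert (Hb0 : 0 < beta) by (unfold beta; apply Rlt_le_trans with alpha; [lra| apply Rmax_l]).
  assert (Hb1 : beta < 1) by (unfold beta; apply Rmax_lub_lt; lra).
  assert (Hba : alpha <= beta) by apply Rmax_l.
  assert (Hbm : 1 - mu <= beta) by apply Rmax_r.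
  assert (Hstep : forall z y r, 0 < r -> PP d act z y r ->
            exists z' y', PP d act z' y' (beta * r) /\ d z z' <= 2 * r).
  { intros z y r Hr H.
    destruct (classic (exists s, d z (act s z) >= (1 - mu) * r)) as [[s Hs] | Hns].
    - destruct (Hball z (act s z) r Hr Hs) as [z' Hz'].
      assert (Hsub : PP d act z (act s y) r) by (apply (PP_sub d mul); auto).
      assert (Hl : PP d act (act s z) (act s y) (k * r)) by (apply (lipP d act k); auto).
      exists z', (act s y). split.
      + intros w Hw. apply Rle_trans with (alpha * r); [|apply Rmult_le_compat_r; lra].
        apply Hz'.
        * specialize (Hsub w Hw). nra.
        * specialize (Hl w Hw).
          assert (0 <= k * (mu * r)) by (apply Rmult_le_pos; [lra | apply Rmult_le_pos; lra]). nra.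
      + assert (Hw : orbit act (act s y) (act s y)) by (left; auto).
        specialize (Hsub _ Hw).
        assert (d z' (act s y) <= alpha * r).
        { apply Hz'; [nra|]. specialize (Hl _ Hw).
          assert (0 <= k * (mu * r)) by (apply Rmult_le_pos; [lra | apply Rmult_le_pos; lra]). nra. }
        specialize (Htri z (act s y) z'). rewrite (Hsym (act s y) z') in Htri. nra.
    - exists z, z. split.
      + intros w [-> | [t ->]].
        * assert (d z z = 0) by (apply Hzero; auto). nra.
        * assert (~ d z (act t z) >= (1 - mu) * r) by eauto. nra.
      + assert (d z z = 0) by (apply Hzero; auto). lra. }
  set (r0 := 2 * M + 1).
  assert (HM0 : 0 <= M) by (specialize (HM x0 (or_introl eq_refl)); specialize (Hpos p x0); lra).
  assert (Hr0 : 0 < r0) by (unfold r0; lra).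
  assert (Hex : forall (n : nat) (q : X * X), exists q' : X * X,
     PP d act (fst q) (snd q) (r0 * beta ^ n) ->
     PP d act (fst q') (snd q') (r0 * beta ^ Datatypes.S n) /\ d (fst q) (fst q') <= 2 * (r0 * beta ^ n)).
  { intros n [z y].
    destruct (classic (PP d act z y (r0 * beta ^ n))) as [H | H].
    - assert (0 < r0 * beta ^ n) by (apply Rmult_lt_0_compat; [lra| apply pow_lt; lra]).
      destruct (Hstep z y _ H0 H) as [z' [y' [H1 H2]]].
      exists (z', y'). simpl. intros _. split; auto.
      replace (r0 * (beta * beta ^ n)) with (beta * (r0 * beta ^ n)) by ring. auto.
    - exists (z, y). intros H'. contradiction. }
  set (F := fun n q => proj1_sig (constructive_indefinite_description _ (Hex n q))).
  assert (HF : forall n q, PP d act (fst q) (snd q) (r0 * beta ^ n) ->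
     PP d act (fst (F n q)) (snd (F n q)) (r0 * beta ^ Datatypes.S n) /\ d (fst q) (fst (F n q)) <= 2 * (r0 * beta ^ n)).
  { intros n q. unfold F. destruct (constructive_indefinite_description _ (Hex n q)). simpl. auto. }
  set (u := fix u (n : nat) : X * X := match n with O => (x0, x0) | Datatypes.S n => F n (u n) end).
  assert (Hinv : forall n, PP d act (fst (u n)) (snd (u n)) (r0 * beta ^ n)).
  { induction n.
    - simpl. intros w Hw. pose proof (HM w Hw). pose proof (HM x0 (or_introl eq_refl)).
      specialize (Htri x0 p w). rewrite (Hsym x0 p) in Htri. unfold r0; simpl. lra.
    - apply (HF n (u n)). auto. }
  assert (Hd : forall n, d (fst (u n)) (fst (u (Datatypes.S n))) <= 2 * (r0 * beta ^ n)).
  { intros n. apply (HF n (u n)). auto. }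
  set (z := fun n => fst (u n)).
  assert (Hcs : forall m j, (1 - beta) * d (z m) (z (m + j)%nat) <= 2 * r0 * (beta ^ m - beta ^ (m + j))).
  { intros m j. induction j.
    - rewrite Nat.add_0_r. assert (d (z m) (z m) = 0) by (apply Hzero; auto). rewrite H. lra.
    - rewrite Nat.add_succ_r. specialize (Hd (m + j)%nat).
      specialize (Htri (z m) (z (m + j)%nat) (z (Datatypes.S (m + j)))).
      simpl pow. unfold z in *. nra. }
  assert (Hpow : forall e, 0 < e -> exists N, forall n, (n >= N)%nat -> beta ^ n < e).
  { intros e He. destruct (pow_lt_1_zero beta ltac:(rewrite Rabs_right; lra) e He) as [N HN].
    exists N. intros n Hn. specialize (HN n Hn). rewrite Rabs_right in HN; auto.
    apply Rle_ge, pow_le; lra. }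
  assert (Hcauchy : forall eps, 0 < eps -> exists N, forall m n, (N <= m)%nat -> (N <= n)%nat ->
        d (z m) (z n) < eps).
  { intros eps He.
    assert (He' : 0 < eps * (1 - beta) / (2 * r0)).
    { apply Rmult_lt_0_compat; [nra| apply Rinv_0_lt_compat; lra]. }
    destruct (Hpow _ He') as [N HN]. exists N.
    assert (Hgen : forall m n, (N <= m)%nat -> (m <= n)%nat -> d (z m) (z n) < eps).
    { intros m n Hm Hmn. replace n with (m + (n - m))%nat by lia.
      specialize (Hcs m (n - m)%nat). specialize (HN m Hm).
      assert (0 < beta ^ (m + (n - m))) by (apply pow_lt; lra).
      assert (beta ^ m * (2 * r0) < eps * (1 - beta)).
      { apply Rmult_lt_reg_r with (/ (2 * r0)). apply Rinv_0_lt_compat; lra.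
        rewrite Rmult_assoc, Rinv_r; [|lra]. lra. }
      nra. }
    intros m n Hm Hn. destruct (Nat.le_ge_cases m n).
    - auto.
    - rewrite Hsym. auto. }
  destruct (Hcomplete z Hcauchy) as [l Hl].
  exists l. intros s.
  apply Hzero.
  apply Rle_antisym; [|auto].
  apply Rnot_lt_le. intros Hpos'.
  set (eps := d (act s l) l) in *.
  set (eta := eps / (2 * k + 4)).
  assert (Heta : 0 < eta) by (unfold eta; apply Rmult_lt_0_compat; [lra| apply Rinv_0_lt_compat; lra]).
  assert (Heta2 : eta * (2 * k + 4) = eps) by (unfold eta; field; lra).
  destruct (Hl eta Heta) as [N1 HN1].
  destruct (Hpow (eta / r0)) as [N2 HN2].
  { apply Rmult_lt_0_compat; [lra| apply Rinv_0_lt_compat; lra]. }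
  set (n := Nat.max N1 N2).
  specialize (HN1 n ltac:(unfold n; lia)). specialize (HN2 n ltac:(unfold n; lia)).
  assert (Hrho : r0 * beta ^ n < eta).
  { apply Rmult_lt_reg_r with (/ r0). apply Rinv_0_lt_compat; lra.
    replace (r0 * beta ^ n * / r0) with (beta ^ n) by (field; lra). exact HN2. }
  set (rho := r0 * beta ^ n) in *.
  assert (Hn := Hinv n). fold (z n) in Hn. fold rho in Hn.
  set (y := snd (u n)) in *.
  assert (Hl' : PP d act l y (d l (z n) + rho)).
  { intros w Hw. specialize (Hn w Hw). specialize (Htri l (z n) w). lra. }
  assert (HL := lipP d act k Hk Hlip _ _ _ Hl' s (act s y) (or_introl eq_refl)).
  assert (Hy := Hn (act s y) (or_intror (ex_intro _ s eq_refl))).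
  assert (Ht := Htri (act s l) (act s y) l).
  assert (Ht2 := Htri (act s y) (z n) l).
  rewrite (Hsym (act s y) (z n)) in Ht2.
  rewrite (Hsym l (z n)) in HL.
  assert (k * (d (z n) l + rho) <= k * (2 * eta)).
  { apply Rmult_le_compat_l; lra. }
  fold eps in Ht. lra.
Qed.
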